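(* Let $\Gamma$ be a finitely generated group, $I$ an index set, and $\rho_i:\Gamma\to G_i$ ($i\in I$) surjective homomorphisms onto finite groups, such that $\Gamma$ has Property $(\tau)$ with respect to the family $(\ker\rho_i)_{i\in I}$. Let $S=S^{-1}$ be a finite symmetric generating set of $\Gamma$; for $N\geq1$ let $W=W_N=S^N$ be the set of words of length $N$ in the alphabet $S$, and for $w=(s_1,\ldots,s_N)$ let $F_w=s_1\cdots s_N\in\Gamma$. Assume there is a word of odd length $c$ in the alphabet $S$ whose value in $\Gamma$ is the identity. Then there exists $\alpha>0$, depending only on $\Gamma$, $|S|$, the $(\tau)$-constant for $(S,\Gamma,(\ker\rho_i))$ and $c$, such that for every $i\in I$, every finite-dimensional complex representation $\pi:\Gamma\to GL(V)$ that factors through $\rho_i$ and does not contain the trivial representation, and all vectors $e,f\in V$, we have for all $N\geq1$ $$\Big|\sum_{w\in W}\langle\pi(F_w)e,f\rangle\Big|\leq\|e\|\,\|f\|\,|W|^{1-\alpha},\qquad\Big|\sum_{w\in W}\operatorname{Tr}\pi(F_w)\Big|\leq(\dim\pi)|W|^{1-\alpha},$$ where $\langle\cdot,\cdot\rangle$ is a $\Gamma$-invariant inner product on $V$.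
   Context: $\Gamma$ has Property $(\tau)$ with respect to a family $(N_i)$ of finite-index normal subgroups if there is $\varepsilon>0$ such that for every unitary representation $\varpi$ of $\Gamma$ that factors through some $\Gamma/N_i$ and does not contain the trivial representation, and every nonzero vector $v$, one has $\max_{s\in S}\|\varpi(s)v-v\|\geq\varepsilon\|v\|$; the $(\tau)$-constant is the largest such $\varepsilon$ (for the generating set $S$). *)

(* Defs.v *)
From HB Require Import structures.
From mathcomp Require Import all_boot all_order all_algebra all_fingroup.
From mathcomp Require Import reals exp complex.
Set Implicit Arguments. Unset Strict Implicit. Unset Printing Implicit Defensive.
Import GRing.Theory Num.Theory.
Local Open Scope ring_scope.
Local Open Scope complex_scope.

Record Grp := {
  gcar :> Type;
  gmul : gcar -> gcar -> gcar;
  gone : gcar;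
  ginv : gcar -> gcar;
  gmulA : associative gmul;
  gmul1g : left_id gone gmul;
  gmulVg : left_inverse gone ginv gmul }.

Section Defs.
Variable G : Grp.

Definition gprod (l : seq G) : G := foldr (@gmul G) (@gone G) l.

Definition is_hom (gT : finGroupType) (rho : G -> gT) :=
  forall x y, rho (gmul x y) = (rho x * rho y)%g.

(* the letters of the alphabet S are s a, a : 'I_k (s injective, so |S| = k);
   a word of length N is w : {ffun 'I_N -> 'I_k}, and F_w = s_(w 0) ... s_(w (N-1)) *)
Definition word_val (k N : nat) (s : 'I_k -> G) (w : {ffun 'I_N -> 'I_k}) : G :=
  gprod [seq s (w j) | j <- enum 'I_N].

Definition symmetric_set (k : nat) (s : 'I_k -> G) :=
  forall a, exists b, s b = ginv (s a).

Definition generates (k : nat) (s : 'I_k -> G) :=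
  forall x : G, exists l : seq ('I_k * bool),
    x = gprod [seq if b.2 then s b.1 else ginv (s b.1) | b <- l].

Variable R : realType.

Definition adjmx (m n : nat) (A : 'M[R[i]]_(m, n)) : 'M[R[i]]_(n, m) :=
  (map_mx conjc A)^T.

Definition mx_rep (n : nat) (pi : G -> 'M[R[i]]_n) :=
  pi (@gone G) = 1%:M /\ forall x y, pi (gmul x y) = pi x *m pi y.

Definition unitary_rep (n : nat) (pi : G -> 'M[R[i]]_n) :=
  mx_rep pi /\ forall x, adjmx (pi x) *m pi x = 1%:M.

Definition vnorm (n : nat) (v : 'cV[R[i]]_n) : R[i] :=
  sqrtC ((adjmx v *m v) 0 0).

Definition no_trivial_sub (n : nat) (pi : G -> 'M[R[i]]_n) :=
  forall v : 'cV[R[i]]_n, (forall x, pi x *m v = v) -> v = 0.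

(* eps is a (tau)-constant for (S, G, (ker rho_i)_i): every (finite-dimensional)
   unitary representation factoring through some G / ker rho_i without
   invariant vectors moves every nonzero v by at least eps ||v|| under some s in S *)
Definition tau_constant (I : Type) (gT : I -> finGroupType)
    (rho : forall i, G -> gT i) (k : nat) (s : 'I_k -> G) (eps : R) :=
  forall (i : I) (n : nat) (varpi : G -> 'M[R[i]]_n),
    unitary_rep varpi ->
    (forall x, rho i x = 1%g -> varpi x = 1%:M) ->
    no_trivial_sub varpi ->
    forall v : 'cV[R[i]]_n, v != 0 ->
      exists a : 'I_k, eps%:C * vnorm v <= vnorm (varpi (s a) *m v - v).

Definition factors_through (gT : finGroupType) (rho : G -> gT)
    (n : nat) (pi : G -> 'M[R[i]]_n) :=
  exists sigma : gT -> 'M[R[i]]_n, forall x, pi x = sigma (rho x).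

Definition ipH (n : nat) (H : 'M[R[i]]_n) (u v : 'cV[R[i]]_n) : R[i] :=
  (adjmx v *m H *m u) 0 0.

Definition normH (n : nat) (H : 'M[R[i]]_n) (v : 'cV[R[i]]_n) : R[i] :=
  sqrtC (ipH H v v).

Definition inner_product_mx (n : nat) (H : 'M[R[i]]_n) :=
  adjmx H = H /\ forall v : 'cV[R[i]]_n, v != 0 -> 0 < ipH H v v.

Definition invariant_ip (n : nat) (H : 'M[R[i]]_n) (pi : G -> 'M[R[i]]_n) :=
  forall x u v, ipH H (pi x *m u) (pi x *m v) = ipH H u v.

End Defs.

(* Main.v *)
Require Import Defs.
From HB Require Import structures.
From mathcomp Require Import all_boot all_order all_algebra all_fingroup.
From mathcomp Require Import reals exp complex.
From mathcomp Require Import sesquilinear spectral.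
From mathcomp Require Import ring lra.
Set Implicit Arguments. Unset Strict Implicit. Unset Printing Implicit Defensive.
Import Order.TTheory GRing.Theory Num.Theory.
Local Open Scope ring_scope.
Local Open Scope complex_scope.

Section IPC.
Variable R : realType.
Local Notation C := R[i].

Definition ipc n (u v : 'cV[C]_n) : C := (adjmx v *m u) 0 0.

Lemma adjmxM m n p (A : 'M[C]_(m, n)) (B : 'M[C]_(n, p)) :
  adjmx (A *m B) = adjmx B *m adjmx A.
Proof. by rewrite /adjmx map_mxM trmx_mul. Qed.

Lemma adjmxK m n (A : 'M[C]_(m, n)) : adjmx (adjmx A) = A.
Proof. by apply/matrixP => i j; rewrite !mxE conjcK. Qed.

Lemma adjmxD m n (A B : 'M[C]_(m, n)) : adjmx (A + B) = adjmx A + adjmx B.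
Proof. by apply/matrixP => i j; rewrite !mxE rmorphD. Qed.

Lemma adjmx1 n : adjmx (1%:M : 'M[C]_n) = 1%:M.
Proof. by apply/matrixP => i j; rewrite !mxE conjc_nat eq_sym. Qed.

Lemma adjmx_sum n (I : finType) (F : I -> 'M[C]_n) :
  adjmx (\sum_i F i) = \sum_i adjmx (F i).
Proof.
apply/matrixP => i j; rewrite !mxE !summxE rmorph_sum; apply: eq_bigr => l _.
by rewrite !mxE.
Qed.

Lemma ipc_mull n (A : 'M[C]_n) (u v : 'cV[C]_n) :
  ipc (A *m u) v = ipc u (adjmx A *m v).
Proof. by rewrite /ipc adjmxM adjmxK mulmxA. Qed.

Lemma ipcDl n (u w v : 'cV[C]_n) : ipc (u + w) v = ipc u v + ipc w v.
Proof. by rewrite /ipc mulmxDr mxE. Qed.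

Lemma ipcZl n a (u v : 'cV[C]_n) : ipc (a *: u) v = a * ipc u v.
Proof. by rewrite /ipc -scalemxAr mxE. Qed.

Lemma ipcNl n (u v : 'cV[C]_n) : ipc (- u) v = - ipc u v.
Proof. by rewrite -scaleN1r ipcZl mulN1r. Qed.

Lemma ipc_suml n (I : finType) (F : I -> 'cV[C]_n) v :
  ipc (\sum_i F i) v = \sum_i ipc (F i) v.
Proof.
rewrite /ipc mulmx_sumr summxE; by [].
Qed.

Lemma ipcE n (u v : 'cV[C]_n) : ipc u v = \sum_j (v j 0)^*%C * u j 0.
Proof. by rewrite /ipc mxE; apply: eq_bigr => j _; rewrite !mxE. Qed.

Lemma ipc_sym n (u v : 'cV[C]_n) : ipc v u = (ipc u v)^*%C.
Proof.
rewrite !ipcE rmorph_sum; apply: eq_bigr => j _.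
by rewrite rmorphM /= conjcK mulrC.
Qed.

Lemma ipc_dot n (u v : 'cV[C]_n) : ipc u v = dotmx u^T v^T.
Proof.
rewrite ipcE dotmxE mxE; apply: eq_bigr => j _; rewrite !mxE mulrC; by [].
Qed.

Lemma ipc_ge0 n (u : 'cV[C]_n) : 0 <= ipc u u.
Proof. by rewrite ipc_dot dnorm_ge0. Qed.

Lemma ipc_eq0 n (u : 'cV[C]_n) : (ipc u u == 0) = (u == 0).
Proof.
rewrite ipc_dot dnorm_eq0; apply/idP/idP => /eqP H; apply/eqP.
  by rewrite -[u]trmxK H trmx0.
by rewrite H trmx0.
Qed.

Lemma CS n (u v : 'cV[C]_n) :
  `|ipc u v| <= sqrtC (ipc u u) * sqrtC (ipc v v).
Proof. by rewrite !ipc_dot; apply: (CauchySchwarz_sqrt (@dotmx C n) _ _).1. Qed.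


Definition nr n (u : 'cV[C]_n) : R := complex.Re (ipc u u).
Definition rip n (u v : 'cV[C]_n) : R := complex.Re (ipc u v).

Lemma ge0_real (x : C) : 0 <= x -> x = (complex.Re x)%:C.
Proof. by move=> /ger0_Im; case: x => a b /= ->. Qed.

Lemma ipc_nr n (u : 'cV[C]_n) : ipc u u = (nr u)%:C.
Proof. exact/ge0_real/ipc_ge0. Qed.

Lemma nr_ge0 n (u : 'cV[C]_n) : 0 <= nr u.
Proof. by rewrite -ler0c -ipc_nr ipc_ge0. Qed.

Lemma nr_eq0 n (u : 'cV[C]_n) : (nr u == 0) = (u == 0).
Proof.
by rewrite -ipc_eq0 ipc_nr; apply/idP/idP => /eqP H; apply/eqP; [rewrite H | case: H].
Qed.

Lemma ReD (x y : C) : complex.Re (x + y) = complex.Re x + complex.Re y.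
Proof. by case: x; case: y. Qed.
Lemma ReN (x : C) : complex.Re (- x) = - complex.Re x.
Proof. by case: x. Qed.
Lemma ReJ (x : C) : complex.Re (x^*%C) = complex.Re x.
Proof. by case: x. Qed.
Lemma ReMr (t : R) (x : C) : complex.Re (t%:C * x) = t * complex.Re x.
Proof. by case: x => a b /=; rewrite !mul0r subr0. Qed.
Lemma Re_sum (I : finType) (F : I -> C) : complex.Re (\sum_i F i) = \sum_i complex.Re (F i).
Proof.
apply: (big_ind2 (fun x y => complex.Re x = y)) => //.
by move=> x1 x2 y1 y2 <- <-; rewrite ReD.
Qed.

Lemma ipcDr n (u w v : 'cV[C]_n) : ipc v (u + w) = ipc v u + ipc v w.
Proof. by rewrite ipc_sym ipcDl rmorphD /= -!ipc_sym. Qed.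

Lemma rip_sym n (u v : 'cV[C]_n) : rip v u = rip u v.
Proof. by rewrite /rip ipc_sym ReJ. Qed.

Lemma nrD n (u w : 'cV[C]_n) : nr (u + w) = nr u + nr w + 2 * rip u w.
Proof.
rewrite /nr /rip ipcDl !ipcDr !ReD -/(rip w u) rip_sym /rip.
by rewrite mulr2n mulrDl mul1r; ring.
Qed.

Lemma ripZl n t (u v : 'cV[C]_n) : rip (t%:C *: u) v = t * rip u v.
Proof. by rewrite /rip ipcZl ReMr. Qed.

Lemma ripDl n (u w v : 'cV[C]_n) : rip (u + w) v = rip u v + rip w v.
Proof. by rewrite /rip ipcDl ReD. Qed.

Lemma ripNl n (u v : 'cV[C]_n) : rip (- u) v = - rip u v.
Proof. by rewrite /rip ipcNl ReN. Qed.

Lemma nrZ n t (u : 'cV[C]_n) : nr (t%:C *: u) = t ^+ 2 * nr u.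
Proof.
rewrite /nr ipcZl ipc_sym ipcZl ipc_nr -rmorphM conjc_real -rmorphM /=.
by rewrite expr2 mulrA.
Qed.

Lemma nrN n (u : 'cV[C]_n) : nr (- u) = nr u.
Proof. by rewrite -scaleN1r -(rmorphN1 (real_complex R)) nrZ sqrrN expr1n mul1r. Qed.

Lemma rip_mull n (A : 'M[C]_n) (u v : 'cV[C]_n) :
  rip (A *m u) v = rip u (adjmx A *m v).
Proof. by rewrite /rip ipc_mull. Qed.

Lemma vnorm_nr n (u : 'cV[C]_n) : vnorm u = (Num.sqrt (nr u))%:C.
Proof.
rewrite /vnorm -/(ipc u u) ipc_nr.
have h : 0 <= (Num.sqrt (nr u))%:C :> C by rewrite ler0c sqrtr_ge0.
by rewrite -{1}(sqr_sqrtr (nr_ge0 u)) rmorphXn sqrCK.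
Qed.

Lemma CSr n (u v : 'cV[C]_n) :
  `|ipc u v| <= (Num.sqrt (nr u) * Num.sqrt (nr v))%:C.
Proof. by rewrite rmorphM /= -!vnorm_nr; apply: CS. Qed.


Lemma ripDr n (u w v : 'cV[C]_n) : rip v (u + w) = rip v u + rip v w.
Proof. by rewrite rip_sym ripDl !(rip_sym v). Qed.
Lemma ripNr n (u v : 'cV[C]_n) : rip v (- u) = - rip v u.
Proof. by rewrite rip_sym ripNl rip_sym. Qed.
Lemma ripZr n t (u v : 'cV[C]_n) : rip v (t%:C *: u) = t * rip v u.
Proof. by rewrite rip_sym ripZl rip_sym. Qed.
Lemma rip_nr n (u : 'cV[C]_n) : rip u u = nr u.
Proof. by []. Qed.

Lemma real_step (a b c mu Y W r : R) :
  a + 2 * b + c <= mu * (Y + W + 2 * r) ->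
  - (mu * (Y + W + 2 * - r)) <= a - 2 * b + c ->
  4 * b <= 2 * mu * (Y + W).
Proof. move=> h1 h2; lra. Qed.

Lemma real_fin (mu t X Y : R) : 0 < mu -> t * mu = 1 ->
  4 * (t * X) <= 2 * mu * (Y + t ^+ 2 * X) -> X <= mu ^+ 2 * Y.
Proof.
move=> mu0 tmu h.
have : mu * (4 * (t * X)) <= mu * (2 * mu * (Y + t ^+ 2 * X)) by rewrite ler_pM2l.
have -> : mu * (4 * (t * X)) = 4 * (t * mu) * X by ring.
have -> : mu * (2 * mu * (Y + t ^+ 2 * X)) = 2 * mu ^+ 2 * Y + 2 * (t * mu) ^+ 2 * X by ring.
rewrite tmu expr1n !mulr1 => h'; lra.
Qed.

Lemma norm_bound n (T : 'M[C]_n) (mu : R) : 0 < mu -> adjmx T = T ->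
  (forall v, `|rip (T *m v) v| <= mu * nr v) ->
  forall u, nr (T *m u) <= mu ^+ 2 * nr u.
Proof.
move=> mu0 hT hb u.
pose t := mu^-1; pose w := t%:C *: (T *m u).
have tmu : t * mu = 1 by rewrite /t mulVf // gt_eqF.
have t0 : 0 < t by rewrite /t invr_gt0.
have sw : rip (T *m w) u = rip (T *m u) w.
  by rewrite rip_mull hT rip_sym.
have E1 : rip (T *m (u + w)) (u + w) =
   rip (T *m u) u + 2 * rip (T *m u) w + rip (T *m w) w.
  by rewrite mulmxDr !ripDl !ripDr sw; ring.
have E2 : rip (T *m (u + - w)) (u + - w) =
   rip (T *m u) u - 2 * rip (T *m u) w + rip (T *m w) w.
  by rewrite mulmxDr mulmxN !ripDl !ripDr !ripNl !ripNr sw; ring.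
have N1 := nrD u w.
have N2 := nrD u (- w).
rewrite nrN ripNr in N2.
have B1 := hb (u + w); have B2 := hb (u + - w).
rewrite ler_norml in B1; rewrite ler_norml in B2.
case/andP: B1 => _ B1; case/andP: B2 => B2 _.
rewrite E1 N1 in B1; rewrite E2 N2 in B2.
have Hb : rip (T *m u) w = t * nr (T *m u) by rewrite /w ripZr.
have Hw : nr w = t ^+ 2 * nr (T *m u) by rewrite /w nrZ.
rewrite Hb Hw in B1 B2.
have X0 := nr_ge0 (T *m u).
set X := nr (T *m u) in B1 B2 X0 *; set Y := nr u in B1 B2 *.
have key := real_step B1 B2.
by apply: real_fin key.
Qed.


Lemma norm_bound_pow n (T : 'M[C]_n) (mu : R) : 0 < mu -> adjmx T = T ->
  (forall v, `|rip (T *m v) v| <= mu * nr v) ->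
  forall N u, nr (T ^+ N *m u) <= (mu ^+ N) ^+ 2 * nr u.
Proof.
move=> mu0 hT hb; elim=> [|N IH] u; first by rewrite expr0 mul1mx expr1n mul1r.
rewrite exprS -mulmxE -mulmxA.
apply: le_trans (norm_bound mu0 hT hb _) _.
apply: le_trans (ler_wpM2l (ltW (exprn_gt0 2 mu0)) (IH u)) _.
by rewrite mulrA -exprMn -exprS.
Qed.

Lemma ip_pow_bound n (T : 'M[C]_n) (mu : R) : 0 < mu -> adjmx T = T ->
  (forall v, `|rip (T *m v) v| <= mu * nr v) ->
  forall N e f, `|ipc (T ^+ N *m e) f| <=
     ((mu ^+ N) * Num.sqrt (nr e) * Num.sqrt (nr f))%:C.
Proof.
move=> mu0 hT hb N e f; apply: le_trans (CSr _ _) _.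
rewrite lecR ler_wpM2r ?sqrtr_ge0 //.
rewrite -(ger0_norm (ltW (exprn_gt0 N mu0))) -sqrtr_sqr -sqrtrM ?sqr_ge0 //.
rewrite ler_sqrt ?mulr_ge0 ?sqr_ge0 ?nr_ge0 ?exprn_ge0 ?(ltW mu0) //; first exact: norm_bound_pow.
Qed.

Lemma nr_delta n (j : 'I_n) : nr (delta_mx j 0 : 'cV[C]_n) = 1.
Proof.
rewrite /nr ipcE (bigD1 j) //= big1 => [|l hl]; last by rewrite !mxE (negbTE hl) mulr0.
by rewrite !mxE eqxx addr0 conjc1 mulr1.
Qed.

Lemma trace_as_ipc n (A : 'M[C]_n) : \tr A = \sum_j ipc (A *m delta_mx j 0) (delta_mx j 0).
Proof.
rewrite /mxtrace; apply: eq_bigr => j _.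
rewrite ipcE (bigD1 j) //= big1 => [|l hl]; last first.
  by rewrite !mxE (negbTE hl) conjc0 mul0r.
rewrite !mxE eqxx conjc1 mul1r addr0 (bigD1 j) //= big1 => [|l hl].
  by rewrite !mxE eqxx mulr1 addr0.
by rewrite !mxE (negbTE hl) mulr0.
Qed.

Lemma tr_pow_bound n (T : 'M[C]_n) (mu : R) : 0 < mu -> adjmx T = T ->
  (forall v, `|rip (T *m v) v| <= mu * nr v) ->
  forall N, `|\tr (T ^+ N)| <= (n%:R * mu ^+ N)%:C.
Proof.
move=> mu0 hT hb N; rewrite trace_as_ipc; apply: le_trans (ler_norm_sum _ _ _) _.
have h : forall j : 'I_n, `|ipc (T ^+ N *m delta_mx j 0) (delta_mx j 0)| <= (mu ^+ N)%:C.
  by move=> j; apply: le_trans (ip_pow_bound mu0 hT hb _ _ _) _; rewrite !nr_delta sqrtr1 !mulr1.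
apply: le_trans (ler_sum _ (fun j _ => h j)) _.
by rewrite sumr_const card_ord -rmorphMn /= mulr_natl.
Qed.

End IPC.


Section IPC2.
Variable R : realType.
Local Notation C := R[i].

Lemma nr_sub_le n (x z : 'cV[C]_n) (m S : R) : 1 <= m -> nr z <= m * S ->
  nr (x + - z) <= (m + 1) * (nr x + S).
Proof.
move=> m1 hz.
have h0 := nr_ge0 (m%:C *: x + z).
rewrite nrD nrZ ripZl in h0.
rewrite nrD nrN ripNr.
have X0 := nr_ge0 x; have Z0 := nr_ge0 z.
set X := nr x in h0 X0 *; set Z := nr z in h0 hz Z0 *; set r := rip x z in h0 *.
have m0 : 0 < m by apply: lt_le_trans m1; exact: ltr01.
suff h : m * (X + Z + 2 * - r) <= m * ((m + 1) * (X + S)).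
  by rewrite ler_pM2l in h.
clear -m1 hz h0 X0 Z0 m0.
have e1 : m * (X + Z + 2 * - r) = m * X + m * Z - 2 * m * r by ring.
have e2 : m * ((m + 1) * (X + S)) = m * (m * X) + m * X + m * S + m * (m * S) by ring.
have e3 : m ^+ 2 * X + Z + 2 * (m * r) = m * (m * X) + Z + 2 * m * r by ring.
rewrite e1 e2; rewrite e3 in h0.
have : Z <= m * Z by rewrite ler_peMl.
have : m * Z <= m * (m * S) by rewrite ler_pM2l.
lra.
Qed.

Lemma nr0 n : nr (0 : 'cV[C]_n) = 0.
Proof. by apply/eqP; rewrite nr_eq0. Qed.

End IPC2.

Section Rep.
Variables (R : realType) (Gam : Grp) (k : nat) (s : 'I_k -> Gam).
Variables (n : nat) (U : Gam -> 'M[R[i]]_n).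
Hypothesis hU : unitary_rep U.
Local Notation C := R[i].

Lemma U1 : U (gone Gam) = 1%:M.
Proof. by case: hU => [[]]. Qed.
Lemma UM x y : U (gmul x y) = U x *m U y.
Proof. by case: hU => [[_ ->]]. Qed.
Lemma Uunit x : adjmx (U x) *m U x = 1%:M.
Proof. by case: hU => _ ->. Qed.

Lemma nrU x v : nr (U x *m v) = nr v.
Proof. by rewrite /nr ipc_mull mulmxA Uunit mul1mx. Qed.

Lemma adjU x : adjmx (U x) = U (ginv x).
Proof.
have h1 : U x *m adjmx (U x) = 1%:M by apply: mulmx1C; exact: Uunit.
have h2 : U (ginv x) *m U x = 1%:M by rewrite -UM gmulVg U1.
by rewrite -[adjmx _]mul1mx -h2 -mulmxA h1 mulmx1.
Qed.

Lemma word_bound (l : seq 'I_k) v :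
  nr (v - ((-1) ^+ size l)%:C *: (U (gprod (map s l)) *m v)) <=
  (size l)%:R * \sum_(a <- l) nr (v + U (s a) *m v).
Proof.
elim: l => [|a l IH].
  rewrite /= expr0 /gprod /= U1 mul1mx scale1r subrr big_nil mul0r.
  by rewrite nr0.
rewrite big_cons /=.
pose t : R := (-1) ^+ size l.
pose P := U (gprod (map s l)).
pose y := v - t%:C *: (P *m v).
pose x := v + U (s a) *m v.
have E : v - ((-1) ^+ (size l).+1)%:C *: (U (gprod (map s (a :: l))) *m v)
   = x + - (U (s a) *m y).
  rewrite /x /y /gprod /= -/(gprod _) UM -/P exprS mulN1r -/t rmorphN /= scaleNr opprK.
  rewrite mulmxBr -scalemxAr opprB mulmxA.
  by rewrite -addrA [U (s a) *m v + _]addrC subrK.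
rewrite E.
have hz : nr (U (s a) *m y) <= (size l)%:R * \sum_(a <- l) nr (v + U (s a) *m v).
  by rewrite nrU; exact: IH.
case: l IH @t @P @y hz E => [|b l] IH t P y hz E.
  have y0 : y = 0.
    rewrite /y /t /P /= expr0 /gprod /= U1 mul1mx scale1r subrr //.
  rewrite y0 mulmx0 oppr0 addr0 big_nil addr0 /= mul1r; by [].
apply: le_trans (nr_sub_le x _ hz) _; first by rewrite ler1n.
by rewrite natr1.
Qed.

End Rep.


Lemma enum_index (T : finType) : enum T = index_enum T.
Proof. by rewrite -deprecated_filter_index_enum filter_predT. Qed.

Lemma gmulgV (G : Grp) (x : G) : gmul x (ginv x) = gone G.
Proof.
pose y := ginv x.
transitivity (gmul (gmul (ginv y) y) (gmul x y)); first by rewrite gmulVg gmul1g.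
rewrite -gmulA (gmulA y x y).
by rewrite /y gmulVg gmul1g gmulVg.
Qed.

Lemma gmulg1 (G : Grp) (x : G) : gmul x (gone G) = x.
Proof. by rewrite -(gmulVg x) gmulA gmulgV gmul1g. Qed.

Lemma ginvK (G : Grp) (x : G) : ginv (ginv x) = x.
Proof.
by rewrite -[RHS]gmul1g -(gmulVg (ginv x)) -gmulA gmulVg gmulg1.
Qed.

Lemma ginv_inj (G : Grp) : injective (@ginv G).
Proof. by move=> a b h; rewrite -(ginvK a) h ginvK. Qed.

Section Rep2.
Variables (R : realType) (Gam : Grp) (k : nat) (s : 'I_k -> Gam).
Variables (n : nat) (U : Gam -> 'M[R[i]]_n).
Hypothesis hU : unitary_rep U.
Local Notation C := R[i].

Definition Top := \sum_a U (s a).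

Lemma U_gprod (l : seq 'I_k) : U (gprod (map s l)) = \prod_(a <- l) U (s a).
Proof.
elim: l => [|a l IH]; first by rewrite big_nil (U1 hU).
by rewrite big_cons /gprod /= -/(gprod _) (UM hU) IH mulmxE.
Qed.

Lemma sum_words N : \sum_(w : {ffun 'I_N -> 'I_k}) U (word_val s w) = Top ^+ N.
Proof.
rewrite /Top -[in RHS](card_ord N) -prodr_const bigA_distr_bigA.
apply: eq_bigr => w _.
rewrite /word_val (map_comp s w).
by rewrite (U_gprod (map w (enum 'I_N))) big_map enum_index.
Qed.

Lemma Top_herm : symmetric_set s -> injective s -> adjmx Top = Top.
Proof.
move=> hsym hinj.
have [f hf] := boolp.choice hsym.
have finj : injective f.
  move=> a b hab; apply: hinj.
  by apply: (@ginv_inj Gam); rewrite -!hf hab.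
rewrite /Top adjmx_sum [in RHS](reindex_inj finj) /=.
by apply: eq_bigr => a _; rewrite (adjU hU) hf.
Qed.

End Rep2.


Lemma sum_size_le (R : realType) k (l : seq 'I_k) (f : 'I_k -> R) :
  (forall a, 0 <= f a) -> \sum_(a <- l) f a <= (size l)%:R * \sum_a f a.
Proof.
move=> f0; elim: l => [|a l IH]; first by rewrite big_nil mul0r.
rewrite big_cons /= -natr1 mulrDl mul1r addrC lerD //.
by rewrite (bigD1 a) //= lerDl sumr_ge0.
Qed.

Section Rep3.
Variables (R : realType) (Gam : Grp) (k : nat) (s : 'I_k -> Gam).
Variables (n : nat) (U : Gam -> 'M[R[i]]_n).
Hypothesis hU : unitary_rep U.
Local Notation C := R[i].

Lemma odd_word_bound c (hodd : odd c) (w : {ffun 'I_c -> 'I_k})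
  (hw : word_val s w = gone Gam) (v : 'cV[C]_n) :
  4 * nr v <= c%:R * (c%:R * \sum_a nr (v + U (s a) *m v)).
Proof.
have := word_bound s hU (map w (enum 'I_c)) v.
rewrite size_map size_enum_ord.
have e : gprod (map s (map w (enum 'I_c))) = gone Gam by rewrite -map_comp; exact: hw.
rewrite e.
rewrite (U1 hU) mul1mx -signr_odd hodd expr1.
have -> : v - (-1)%:C *: v = v + v.
  by rewrite rmorphN1 scaleN1r opprK.
rewrite nrD rip_nr => h; apply: le_trans (_ : _ <= (c%:R * \sum_(a <- [seq w i | i <- enum 'I_c]) nr (v + U (s a) *m v))) _.
  by apply: le_trans h; rewrite le_eqVlt; apply/orP; left; apply/eqP; ring.
rewrite ler_wpM2l //.
have := sum_size_le (map w (enum 'I_c)) (fun a => nr_ge0 (v + U (s a) *m v)).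
by rewrite size_map size_enum_ord.
Qed.

Lemma real_nr_fin (K d e2 X Sm Sp Rs c2 : R) :
  0 <= X -> 0 < c2 ->
  Sm = 2 * K * X - 2 * Rs -> Sp = 2 * K * X + 2 * Rs ->
  e2 * X <= Sm -> 2 * d * X <= e2 * X ->
  4 * X <= c2 * Sp -> c2 * (2 * d * X) <= 4 * X ->
  `|Rs| <= (K - d) * X.
Proof.
move=> X0 c20 hSm hSp h1 h2 h3 h4.
have h5 : c2 * (2 * d * X) <= c2 * Sp by apply: le_trans h4 h3.
rewrite ler_pM2l // in h5.
rewrite ler_norml; apply/andP; split; lra.
Qed.

Lemma num_range (eps d : R) c (hodd : odd c) (w : {ffun 'I_c -> 'I_k})
  (hw : word_val s w = gone Gam) :
  (forall v : 'cV[C]_n, v != 0 ->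
     exists a, eps%:C * vnorm v <= vnorm (U (s a) *m v - v)) ->
  0 < eps -> 2 * d <= eps ^+ 2 -> d * (c%:R) ^+ 2 <= 2 ->
  forall v, `|rip (Top s U *m v) v| <= (k%:R - d) * nr v.
Proof.
move=> htau eps0 hd1 hd2 v.
have [->|v0] := eqVneq v 0.
  by rewrite mulmx0 /rip /ipc mulmx0 mxE normr0 nr0 mulr0.
have [a0 ha0] := htau v v0.
have hRs : rip (Top s U *m v) v = \sum_a rip (U (s a) *m v) v.
  by rewrite /Top mulmx_suml /rip ipc_suml Re_sum.
have hm : forall a, nr (U (s a) *m v - v) = 2 * nr v - 2 * rip (U (s a) *m v) v.
  by move=> a; rewrite nrD (nrU hU) nrN ripNr; ring.
have hp : forall a, nr (v + U (s a) *m v) = 2 * nr v + 2 * rip (U (s a) *m v) v.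
  by move=> a; rewrite nrD (nrU hU) rip_sym; ring.
have hSm : \sum_a nr (U (s a) *m v - v) = 2 * k%:R * nr v - 2 * \sum_a rip (U (s a) *m v) v.
  rewrite (eq_bigr _ (fun a _ => hm a)) sumrB sumr_const card_ord -mulr_sumr.
  by rewrite -mulr_natl; ring.
have hSp : \sum_a nr (v + U (s a) *m v) = 2 * k%:R * nr v + 2 * \sum_a rip (U (s a) *m v) v.
  rewrite (eq_bigr _ (fun a _ => hp a)) big_split sumr_const card_ord -mulr_sumr /=.
  by rewrite -mulr_natl; ring.
have h1 : eps ^+ 2 * nr v <= \sum_a nr (U (s a) *m v - v).
  apply: le_trans (_ : _ <= nr (U (s a0) *m v - v)) _; last first.
    by rewrite (bigD1 a0) //= lerDl sumr_ge0 // => a _; apply: nr_ge0.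
  move: ha0; rewrite !vnorm_nr -rmorphM /= lecR => ha0.
  rewrite -(sqr_sqrtr (nr_ge0 v)) -(sqr_sqrtr (nr_ge0 (U (s a0) *m v - v))) -exprMn.
  by rewrite ler_sqr // nnegrE ?mulr_ge0 ?sqrtr_ge0 // ltW.
have h3 := odd_word_bound hodd hw v.
have c0 : 0 < (c%:R : R) ^+ 2 by rewrite exprn_gt0 // ltr0n; case: (c) hodd.
rewrite hRs; apply: (real_nr_fin (c2 := (c%:R : R) ^+ 2) (nr_ge0 v) c0 hSm hSp h1).
- by rewrite ler_wpM2r // nr_ge0.
- by rewrite expr2 -mulrA.
- have -> : (c%:R : R) ^+ 2 * (2 * d * nr v) = 2 * (d * (c%:R) ^+ 2) * nr v by ring.
  have -> : (4 : R) * nr v = 2 * 2 * nr v by ring.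
  by rewrite ler_wpM2r ?nr_ge0 // ler_wpM2l.
Qed.

End Rep3.


Section Chol.
Variable R : realType.
Local Notation C := R[i].

Lemma adjmx_tC m n (A : 'M[C]_(m, n)) : adjmx A = (A ^t* )%sesqui.
Proof. by apply/matrixP => i j; rewrite !mxE. Qed.

Lemma adj_delta n (i : 'I_n) : adjmx (delta_mx i 0 : 'cV[C]_n) = delta_mx 0 i.
Proof. by apply/matrixP => a b; rewrite !mxE conjc_nat andbC. Qed.

Lemma entry_form n (M : 'M[C]_n) i j :
  (adjmx (delta_mx i 0 : 'cV[C]_n) *m M *m (delta_mx j 0 : 'cV[C]_n)) 0 0 = M i j.
Proof. by rewrite adj_delta -rowE -colE !mxE. Qed.

Lemma chol n (H : 'M[C]_n) : inner_product_mx H ->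
  exists L : 'M[C]_n, L \in unitmx /\ adjmx L *m L = H.
Proof.
case=> hH hpos.
have hnorm : H \is normalmx.
  by apply/normalmxP; rewrite -adjmx_tC hH.
have /orthomx_spectralP := hnorm.
set P := spectralmx H; set dv := spectral_diag H => hdec.
have Pu : P \is unitarymx := spectral_unitarymx H.
have PPt : P *m adjmx P = 1%:M by rewrite adjmx_tC; apply/unitarymxP.
rewrite (invmx_unitary Pu) -adjmx_tC in hdec.
have dpos : forall j, 0 < dv 0 j.
  move=> j; pose v : 'cV[C]_n := adjmx P *m delta_mx j 0.
  have v0 : v != 0.
    apply/eqP => hv.
    have : P *m v = delta_mx j 0 by rewrite /v mulmxA PPt mul1mx.
    rewrite hv mulmx0 => /matrixP /(_ j 0); rewrite !mxE !eqxx /=.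
    by move/eqP; rewrite eq_sym oner_eq0.
  have := hpos v v0; rewrite /ipH /v adjmxM adjmxK hdec.
  have -> : adjmx (delta_mx j 0 : 'cV[C]_n) *m P *m (adjmx P *m diag_mx dv *m P) *m
             (adjmx P *m (delta_mx j 0 : 'cV[C]_n)) =
            adjmx (delta_mx j 0 : 'cV[C]_n) *m diag_mx dv *m (delta_mx j 0 : 'cV[C]_n).
    by rewrite !mulmxA -[_ *m P *m adjmx P]mulmxA PPt mulmx1 -[_ *m P *m adjmx P]mulmxA PPt mulmx1.
  by rewrite entry_form mxE eqxx mulr1n.
pose sq := \row_j sqrtC (dv 0 j).
exists (diag_mx sq *m P); split.
  rewrite unitmx_mul (unitarymx_unit Pu) andbT unitmxE det_diag unitfE.
  by apply/prodf_neq0 => j _; rewrite mxE sqrtC_eq0 gt_eqF.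
rewrite adjmxM -mulmxA [adjmx (diag_mx sq) *m _]mulmxA.
have -> : adjmx (diag_mx sq) *m diag_mx sq = diag_mx dv.
  have -> : adjmx (diag_mx sq) = diag_mx (map_mx conjc sq).
    apply/matrixP => a b; rewrite !mxE.
    case: (eqVneq a b) => [->|h] /=; first by [].
    by rewrite !mulr0n; apply: conjc0.
  apply/matrixP => a b; rewrite mul_diag_mx !mxE.
  case: (eqVneq a b) => [->|hab] /=; last by rewrite !mulr0n mulr0.
  rewrite !mulr1n.
  have hc : (sqrtC (dv 0 b))^*%C = sqrtC (dv 0 b).
    by apply: conj_Creal; rewrite ger0_real // sqrtC_ge0 ltW.
  rewrite hc.
  by rewrite -expr2 sqrtCK.
by rewrite mulmxA hdec.
Qed.

End Chol.


Lemma pow_bound (R : realType) (k : nat) (d : R) N : (1 <= k)%N -> 0 < d -> d < k%:R ->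
  (k%:R - d) ^+ N <= (k%:R ^+ N) `^ (1 - ln (k%:R / (k%:R - d)) / ln (k%:R + 1)).
Proof.
move=> k1 d0 dk.
set K : R := k%:R.
have K1 : 1 <= K by rewrite /K ler1n.
have K0 : 0 < K by apply: lt_le_trans K1; exact: ltr01.
have Kd : 0 < K - d by rewrite subr_gt0.
have lK1 : 0 < ln (K + 1) by apply: ln_gt0; rewrite ltrDr.
set a := ln (K / (K - d)) / ln (K + 1).
have a0 : 0 <= a.
  apply: divr_ge0; last exact: ltW.
  by apply: ln_ge0; rewrite ler_pdivlMr // mul1r gerDl oppr_le0 ltW.
have ha : a * ln (K + 1) = ln K - ln (K - d).
  by rewrite /a divfK ?gt_eqF // ln_div // posrE.
have hK : a * ln K <= a * ln (K + 1).
  rewrite ler_wpM2l // ler_ln ?posrE //; [by rewrite lerDl ler01 | by apply: lt_le_trans K0 _; rewrite lerDl ler01].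
have KN : 0 < K ^+ N by rewrite exprn_gt0.
rewrite /powR gt_eqF //.
rewrite -[(K - d) ^+ N]lnK ?posrE ?exprn_gt0 // ler_expR.
rewrite (lnXn N Kd) (lnXn N K0) mulrnAr lerMn2r; apply/orP; right.
rewrite ha in hK; clear -hK; lra.
Qed.

Section Unit.
Variables (R : realType) (Gam : Grp) (n : nat) (pi : Gam -> 'M[R[i]]_n).
Variables (H L : 'M[R[i]]_n).
Hypotheses (hL : L \in unitmx) (hLH : adjmx L *m L = H).
Hypotheses (hrep : mx_rep pi) (hinv : invariant_ip H pi).
Local Notation C := R[i].

Definition Uof x := L *m pi x *m invmx L.

Lemma ipH_ipc (u v : 'cV[C]_n) : ipH H u v = ipc (L *m u) (L *m v).
Proof. by rewrite /ipH /ipc adjmxM -hLH !mulmxA. Qed.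

Lemma piHpi x : adjmx (pi x) *m H *m pi x = H.
Proof.
apply/matrixP => i j; rewrite -[LHS](entry_form (R := R)) -[RHS](entry_form (R := R)).
have := hinv x (delta_mx j 0) (delta_mx i 0); rewrite /ipH adjmxM !mulmxA => ->.
by [].
Qed.

Lemma Uof_unitary : unitary_rep Uof.
Proof.
case: hrep => h1 hM; split; first split.
- by rewrite /Uof h1 mulmx1 mulmxV.
- by move=> x y; rewrite /Uof hM !mulmxA mulmxKV.
move=> x; rewrite /Uof.
transitivity (adjmx (invmx L) *m (adjmx (pi x) *m (adjmx L *m L) *m pi x) *m invmx L).
  by rewrite !adjmxM !mulmxA.
rewrite hLH piHpi -hLH !mulmxA -adjmxM mulmxV // adjmx1 mul1mx mulmxV //.
Qed.

Lemma Uof_L x (e : 'cV[C]_n) : Uof x *m (L *m e) = L *m (pi x *m e).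
Proof. by rewrite /Uof mulmxA mulmxKV // mulmxA. Qed.

Lemma tr_Uof x : \tr (Uof x) = \tr (pi x).
Proof. by rewrite /Uof -mulmxA mxtrace_mulC mulmxKV. Qed.

Lemma Uof_notriv : no_trivial_sub pi -> no_trivial_sub Uof.
Proof.
move=> hnt v hv.
have : invmx L *m v = 0.
  apply: hnt => x.
  by rewrite -{2}(hv x) /Uof !mulmxA mulVmx // mul1mx -!mulmxA.
by move=> h; rewrite -(mulKVmx hL v) h mulmx0.
Qed.

Lemma Uof_ker (gT : finGroupType) (rho : Gam -> gT) : is_hom rho ->
  factors_through rho pi -> forall x, rho x = 1%g -> Uof x = 1%:M.
Proof.
move=> hh [sigma hs] x hx.
have r1 : rho (gone Gam) = 1%g.
  have h : (rho (gone Gam) * rho (gone Gam) = rho (gone Gam) * 1)%g.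
    by rewrite mulg1 -hh gmul1g.
  exact: (mulgI _ _ _ h).
have : pi x = 1%:M by rewrite hs hx -r1 -hs; case: hrep.
by rewrite /Uof => ->; rewrite mulmx1 mulmxV.
Qed.

End Unit.

Unset Implicit Arguments.

Theorem proposition9p2 (R : realType) (Gam : Grp) (k c : nat) (eps : R) :
  0 < eps ->
  exists alpha : R, 0 < alpha /\
  forall (I : Type) (gT : I -> finGroupType) (rho : forall i, Gam -> gT i)
         (s : 'I_k -> Gam),
    (forall i, is_hom (rho i)) ->
    (forall i (y : gT i), exists x, rho i x = y) ->
    injective s -> symmetric_set s -> generates s ->
    odd c -> (exists w : {ffun 'I_c -> 'I_k}, word_val s w = gone Gam) ->
    tau_constant rho s eps ->
    forall (i : I) (n : nat) (pi : Gam -> 'M[R[i]]_n) (H : 'M[R[i]]_n),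
      mx_rep pi -> factors_through (rho i) pi -> no_trivial_sub pi ->
      inner_product_mx H -> invariant_ip H pi ->
      forall (e f : 'cV[R[i]]_n) (N : nat), (0 < N)%N ->
        `| \sum_(w : {ffun 'I_N -> 'I_k}) ipH H (pi (word_val s w) *m e) f |
          <= normH H e * normH H f
             * ((#|{ffun 'I_N -> 'I_k}|%:R : R) `^ (1 - alpha))%:C
        /\
        `| \sum_(w : {ffun 'I_N -> 'I_k}) \tr (pi (word_val s w)) |
          <= n%:R * ((#|{ffun 'I_N -> 'I_k}|%:R : R) `^ (1 - alpha))%:C.
Proof.
move=> eps0.
have [k0|kpos] := posnP k.
  subst k; exists 1; split; first exact: ltr01.
  move=> I gT rho s hhom hsurj hinj hsym hgen hodd hw htau i n pi H hrep hfac hnt hip hinv e f N hN.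
  have hempty : forall (F : {ffun 'I_N -> 'I_0} -> R[i]), \sum_w F w = 0.
    by move=> F; apply: big1 => w _; case: (w (Ordinal hN)).
  have [L [hL hLH]] := chol hip.
  have nH : forall v, 0 <= normH H v.
    by move=> v; rewrite /normH (ipH_ipc hLH) sqrtC_ge0 ipc_ge0.
  rewrite !hempty normr0; split.
    by rewrite !mulr_ge0 // ler0c powR_ge0.
  by rewrite !mulr_ge0 // ?ler0n // ler0c powR_ge0.
pose dd : R := Num.min (Num.min (eps ^+ 2 / 2) (2 / ((c.+1)%:R) ^+ 2)) (2^-1).
have dd0 : 0 < dd.
  rewrite /dd !lt_min !divr_gt0 ?exprn_gt0 ?ltr0n ?invr_gt0 ?ltr0n //.
have dd1 : 2 * dd <= eps ^+ 2.
  have : dd <= eps ^+ 2 / 2 by rewrite /dd !ge_min lexx.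
  by rewrite ler_pdivlMr ?ltr0n // mulrC.
have dd2 : dd <= 2 / ((c.+1)%:R) ^+ 2 by rewrite /dd !ge_min lexx orbT.
have dd3 : dd <= 2^-1 by rewrite /dd ge_min lexx orbT.
have K1 : 1 <= (k%:R : R) by rewrite ler1n.
have ddK : dd < k%:R by apply: le_lt_trans dd3 _; apply: lt_le_trans K1; rewrite invf_lt1 ?ltr0n // ltr1n.
exists (ln (k%:R / (k%:R - dd)) / ln (k%:R + 1)); split.
  apply: divr_gt0; apply: ln_gt0; last by rewrite -subr_gt0 addrK ltr0n.
  rewrite ltr_pdivlMr; last by rewrite subr_gt0.
  by rewrite mul1r gtrDl oppr_lt0.
move=> I gT rho s hhom hsurj hinj hsym hgen hodd [w hw] htau i n pi H hrep hfac hnt hip hinv e f N hN.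
have [L [hL hLH]] := chol hip.
pose U := Uof pi L.
have hU : unitary_rep U := Uof_unitary hL hLH hrep hinv.
have hker := Uof_ker hL hrep (hhom i) hfac.
have hnt' := Uof_notriv hL hnt.
have htau' := htau i n U hU hker hnt'.
have hd2 : dd * (c%:R) ^+ 2 <= 2.
  have dd2' := dd2.
  rewrite ler_pdivlMr ?exprn_gt0 ?ltr0n // in dd2'.
  apply: le_trans dd2'.
  by rewrite ler_wpM2l ?(ltW dd0) // ler_sqr ?nnegrE ?ler0n // ler_nat.
have hnr := num_range hU hodd hw htau' eps0 dd1 hd2.
have hT := Top_herm hU hsym hinj.
have mu0 : 0 < k%:R - dd by rewrite subr_gt0.
have E1 : \sum_(w : {ffun 'I_N -> 'I_k}) ipH H (pi (word_val s w) *m e) f =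
          ipc (Top s U ^+ N *m (L *m e)) (L *m f).
  rewrite -(sum_words s hU N) mulmx_suml ipc_suml; apply: eq_bigr => w' _.
  by rewrite (ipH_ipc hLH) (Uof_L pi hL).
have E2 : \sum_(w : {ffun 'I_N -> 'I_k}) \tr (pi (word_val s w)) = \tr (Top s U ^+ N).
  rewrite -(sum_words s hU N) raddf_sum; apply: eq_bigr => w' _.
  by rewrite /U /= (tr_Uof pi hL).
have Ecard : (#|{ffun 'I_N -> 'I_k}|%:R : R) = (k%:R) ^+ N by rewrite card_ffun !card_ord natrX.
have hp := pow_bound N kpos dd0 ddK.
have nH : forall v, normH H v = (Num.sqrt (nr (L *m v)))%:C.
  by move=> v; rewrite /normH (ipH_ipc hLH) -vnorm_nr.
rewrite E1 E2 Ecard !nH; split.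
  apply: le_trans (ip_pow_bound mu0 hT hnr N _ _) _.
  rewrite -!rmorphM lecR.
  rewrite -mulrA [X in _ <= X]mulrC ler_wpM2r // ?mulr_ge0 ?sqrtr_ge0 //.
apply: le_trans (tr_pow_bound mu0 hT hnr N) _.
rewrite -(rmorph_nat (real_complex R)) -rmorphM lecR.
by rewrite ler_wpM2l ?ler0n.
Qed.
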